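(* Let $S,T\subseteq(\Sigma\cup\Gamma)^*$ be regular languages of finite shiftlag. Then $\mathit{minsync}(S,T)$ is regular if and only if $\mathit{allsync}(S,T)$ is regular.
   Context: $\Sigma,\Gamma$ are disjoint finite alphabets. For $w\in(\Sigma\cup\Gamma)^*$, $\llbracket w\rrbracket=(\pi_{\mathtt i}(w),\pi_{\mathtt o}(w))$ where $\pi_{\mathtt i}$ (resp. $\pi_{\mathtt o}$) deletes all letters of $\Gamma$ (resp. $\Sigma$), and $\llbracket L\rrbracket=\{\llbracket w\rrbracket:w\in L\}$. A position $i$ of $w$ is $\geq k$-lagged if the absolute difference between the numbers of $\Sigma$-letters and $\Gamma$-letters in $w[1..i]$ is at least $k$. A shift of $w$ is a position $i\in\{1,\dots,|w|-1\}$ with exactly one of $w[i],w[i+1]$ in $\Sigma$; shifts $i<j$ are consecutive if no shift lies strictly between them. $\mathit{shift}(w)$ is the number of shifts; $\mathit{shiftlag}(w)$ is the maximal $n$ such that $w$ contains $n$ consecutive shifts all $\geq n$-lagged. A language has finite shift (resp. finite shiftlag) if the supremum of $\mathit{shift}$ (resp. $\mathit{shiftlag}$) over its words is finite; $\mathrm{Reg}_{\mathsf{FS}}$ denotes the class of regular languages of finite shift. For $x\in(\Sigma\cup\Gamma)^*$, $x^{-1}T=\{z: xz\in T\}$, and $w[1,i]$ is the prefix of $w$ of length $i$. For $w,w'\in T$ with $\llbracket w\rrbracket=\llbracket w'\rrbracket$, write $w\preceq_T w'$ if for all $i\le|w|$, $(w'[1,i])^{-1}T\in\mathrm{Reg}_{\mathsf{FS}}$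 implies $(w[1,i])^{-1}T\in\mathrm{Reg}_{\mathsf{FS}}$. Define $\mathit{minsync}(S,T)=\{w\in T:\llbracket w\rrbracket\in\llbracket S\rrbracket,\ w\preceq_T w'\text{ for all }w'\in T\text{ with }\llbracket w'\rrbracket=\llbracket w\rrbracket\}$ and $\mathit{allsync}(S,T)=\{w\in T:\llbracket w\rrbracket\in\llbracket S\rrbracket\}$. *)

(* Defs.v *)
From mathcomp Require Import all_boot.
Set Implicit Arguments. Unset Strict Implicit. Unset Printing Implicit Defensive.

Section Defs.
Variables (Sigma Gamma : finType).
Definition letter := (Sigma + Gamma)%type.
Definition word := seq letter.
Definition lang := word -> Prop.

Definition regular (L : lang) : Prop :=
  exists (Q : finType) (q0 : Q) (delta : Q -> letter -> Q) (F : pred Q),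
    forall w : word, L w <-> F (foldl delta q0 w).

Definition isSigma (a : letter) : bool := if a is inl _ then true else false.
Definition pi_i (w : word) : seq Sigma :=
  pmap (fun a : letter => if a is inl x then Some x else None) w.
Definition pi_o (w : word) : seq Gamma :=
  pmap (fun a : letter => if a is inr y then Some y else None) w.
Definition sem (w : word) : seq Sigma * seq Gamma := (pi_i w, pi_o w).
Definition in_sem (L : lang) (p : seq Sigma * seq Gamma) : Prop :=
  exists w, L w /\ sem w = p.

Definition absdiff (a b : nat) : nat := (a - b) + (b - a).
(* lag of position i (1-based): |#Sigma - #Gamma| in w[1..i] *)
Definition lag (w : word) (i : nat) : nat :=
  absdiff (count isSigma (take i w)) (count (predC isSigma) (take i w)).
Definition lagged (w : word) (k i : nat) : bool := k <= lag w i.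

Definition sigma_at (w : word) (i : nat) : bool := nth false (map isSigma w) i.-1.
Definition shifts (w : word) : seq nat :=
  [seq i <- iota 1 (size w).-1 | sigma_at w i != sigma_at w i.+1].
Definition shift (w : word) : nat := size (shifts w).

(* w contains n consecutive shifts, all >= n-lagged: a contiguous block of
   length n of the (sorted) list of shifts *)
Definition has_shiftlag (w : word) (n : nat) : Prop :=
  exists s : seq nat, [/\ infix s (shifts w), size s = n & all (lagged w n) s].

(* shiftlag(w) = max n with has_shiftlag w n; finiteness of the supremum over
   L is expressed by a uniform bound on all such n *)
Definition finite_shiftlag (L : lang) : Prop :=
  exists N, forall w n, L w -> has_shiftlag w n -> n <= N.
Definition finite_shift (L : lang) : Prop :=
  exists N, forall w, L w -> shift w <= N.

Definition RegFS (L : lang) : Prop := regular L /\ finite_shift L.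

Definition lquot (x : word) (T : lang) : lang := fun z => T (x ++ z).

Definition precT (T : lang) (w w' : word) : Prop :=
  forall i, i <= size w ->
    RegFS (lquot (take i w') T) -> RegFS (lquot (take i w) T).

Definition minsync (S T : lang) : lang := fun w =>
  T w /\ in_sem S (sem w) /\
  (forall w', T w' -> sem w' = sem w -> precT T w w').

Definition allsync (S T : lang) : lang := fun w => T w /\ in_sem S (sem w).

End Defs.

(* Main.v *)
Require Import Defs.
From mathcomp Require Import all_boot.
From Stdlib Require Import ClassicalEpsilon Classical.
From mathcomp Require Import zify.
Set Implicit Arguments. Unset Strict Implicit. Unset Printing Implicit Defensive.

Definition pb (P : Prop) : bool := if excluded_middle_informative P then true else false.
Lemma pbE (P : Prop) : pb P <-> P.
Proof. rewrite /pb; case: excluded_middle_informative => // _; split => //. Qed.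

Lemma catI (T : Type) (s x y : seq T) : s ++ x = s ++ y -> x = y.
Proof. by elim: s => //= a s IH [] /IH. Qed.

Section Reg.
Variable A : Type.
Definition regA (L : seq A -> Prop) : Prop :=
  exists (Q : finType) (q0 : Q) (d : Q -> A -> Q) (F : pred Q),
    forall w, L w <-> F (foldl d q0 w).

Lemma reg_ext (L L' : seq A -> Prop) : (forall w, L w <-> L' w) -> regA L -> regA L'.
Proof.
move=> E [Q [q0 [d [F H]]]]; exists Q, q0, d, F => w; rewrite -E; exact: H.
Qed.

Fixpoint nrun (Q : Type) (tr : Q -> A -> Q -> Prop) (q : Q) (w : seq A) (q' : Q) : Prop :=
  match w with [::] => q = q' | a :: w => exists q1, tr q a q1 /\ nrun tr q1 w q' end.

Lemma nrun_cat (Q : Type) (tr : Q -> A -> Q -> Prop) q u v q' :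
  nrun tr q (u ++ v) q' <-> exists q1, nrun tr q u q1 /\ nrun tr q1 v q'.
Proof.
elim: u q => [|a u IH] q /=.
  split; [by move=> H; exists q | by move=> [q1 [-> H]]].
split.
  move=> [q1 [Ht Hr]]; have [q2 [H1 H2]] := (proj1 (IH q1)) Hr.
  exists q2; split => //; exists q1; by split.
move=> [q2 [[q1 [Ht H1]] H2]]; exists q1; split => //; apply/IH; by exists q2.
Qed.

Lemma nrun_rcons (Q : Type) (tr : Q -> A -> Q -> Prop) q u a q' :
  nrun tr q (rcons u a) q' <-> exists q1, nrun tr q u q1 /\ tr q1 a q'.
Proof.
rewrite -cats1 nrun_cat; split.
  by move=> [q1 [H1 [q2 [H2 <-]]]]; exists q1.
by move=> [q1 [H1 H2]]; exists q1; split => //; exists q'.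
Qed.

Definition nreg (L : seq A -> Prop) : Prop :=
  exists (Q : finType) (I : Q -> Prop) (tr : Q -> A -> Q -> Prop) (F : Q -> Prop),
    forall w, L w <-> exists q q', I q /\ nrun tr q w q' /\ F q'.

Lemma nreg_reg L : nreg L -> regA L.
Proof.
move=> [Q [I [tr [F H]]]].
pose d (X : {set Q}) (a : A) := [set q' | [exists q in X, pb (tr q a q')]].
have key : forall w X q', (q' \in foldl d X w) <-> exists q, q \in X /\ nrun tr q w q'.
  elim=> [|a w IH] X q' /=.
    by split; [move=> Hq; exists q' | move=> [q [Hq <-]]].
  rewrite IH; split.
    move=> [q1 [Hq1 Hr]]; move: Hq1; rewrite inE => /existsP [q /andP [Hq /pbE Ht]].
    by exists q; split => //; exists q1.
  move=> [q [Hq [q1 [Ht Hr]]]]; exists q1; split => //.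
  by rewrite inE; apply/existsP; exists q; rewrite Hq; apply/pbE.
exists {set Q}, [set q | pb (I q)], d, (fun X : {set Q} => [exists q in X, pb (F q)]) => w.
rewrite H; split.
  move=> [q [q' [Hi [Hr Hf]]]]; apply/existsP; exists q'; apply/andP; split; last by apply/pbE.
  by apply/key; exists q; rewrite inE; split => //; apply/pbE.
move=> /existsP [q' /andP [/key [q [Hq Hr]] /pbE Hf]].
by exists q, q'; move: Hq; rewrite inE => /pbE.
Qed.

Lemma reg_nreg L : regA L -> nreg L.
Proof.
move=> [Q [q0 [d [F H]]]].
exists Q, (eq q0), (fun q a q' => q' = d q a), F => w.
have E : forall q q', nrun (fun q a q' => q' = d q a) q w q' <-> q' = foldl d q w.
  elim: w => [|a w IH] q q' /=; first by split.
  by split; [move=> [q1 [-> /IH]] | move=> ->; exists (d q a); split => //; apply/IH].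
rewrite H; split.
  by move=> Hf; exists q0, (foldl d q0 w); split => //; split => //; apply/E.
by move=> [q [q' [<- [/E -> Hf]]]].
Qed.

Lemma reg_not L : regA L -> regA (fun w => ~ L w).
Proof.
move=> [Q [q0 [d [F H]]]]; exists Q, q0, d, (predC F) => w /=.
rewrite H; split; [by move/negP | by move/negP].
Qed.

Lemma foldl_pair (Q1 Q2 : Type) (d1 : Q1 -> A -> Q1) (d2 : Q2 -> A -> Q2) q1 q2 w :
  foldl (fun q a => (d1 q.1 a, d2 q.2 a)) (q1, q2) w = (foldl d1 q1 w, foldl d2 q2 w).
Proof. by elim: w q1 q2 => //= a w IH q1 q2; rewrite IH. Qed.

Lemma reg_and L1 L2 : regA L1 -> regA L2 -> regA (fun w => L1 w /\ L2 w).
Proof.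
move=> [Q1 [q1 [d1 [F1 H1]]]] [Q2 [q2 [d2 [F2 H2]]]].
exists (Q1 * Q2)%type, (q1, q2), (fun q a => (d1 q.1 a, d2 q.2 a)),
  (fun q => F1 q.1 && F2 q.2) => w.
rewrite foldl_pair /= H1 H2; split; [by move=> [-> ->] | by move/andP].
Qed.

Lemma reg_or L1 L2 : regA L1 -> regA L2 -> regA (fun w => L1 w \/ L2 w).
Proof.
move=> [Q1 [q1 [d1 [F1 H1]]]] [Q2 [q2 [d2 [F2 H2]]]].
exists (Q1 * Q2)%type, (q1, q2), (fun q a => (d1 q.1 a, d2 q.2 a)),
  (fun q => F1 q.1 || F2 q.2) => w.
rewrite foldl_pair /= H1 H2; split; [by move=> [->|->] // ; rewrite orbT | by move/orP].
Qed.

Lemma reg_empty : regA (fun _ => False).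
Proof. by exists bool, true, (fun q _ => q), pred0. Qed.

Lemma reg_guard (P : Prop) L : (P -> regA L) -> regA (fun w => P /\ L w).
Proof.
case: (classic P) => HP HL.
  by apply: reg_ext (HL HP) => w; split => // [[]].
by apply: reg_ext reg_empty => w; split => // [[]].
Qed.

Lemma reg_exists (I : finType) (L : I -> seq A -> Prop) :
  (forall i, regA (L i)) -> regA (fun w => exists i, L i w).
Proof.
move=> HL.
have H : forall s : seq I, regA (fun w => exists i, i \in s /\ L i w).
  elim=> [|i s IH].
    by apply: reg_ext reg_empty => w; split => // [[i []]].
  apply: reg_ext (reg_or (HL i) IH) => w; split.
    by move=> [Hi|[j [Hj Hl]]]; [exists i; rewrite inE eqxx | exists j; rewrite inE Hj orbT].
  move=> [j []]; rewrite inE => /orP [/eqP -> Hl|Hj Hl]; [by left | right; by exists j].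
apply: reg_ext (H (enum I)) => w; split; move=> [i]; [move=> [] _|]; exists i => //.
by rewrite mem_enum.
Qed.

Lemma reg_quot L s : regA L -> regA (fun w => L (s ++ w)).
Proof.
move=> [Q [q0 [d [F H]]]]; exists Q, (foldl d q0 s), d, F => w.
by rewrite H foldl_cat.
Qed.

Lemma reg_concat L1 L2 : regA L1 -> regA L2 ->
  regA (fun w => exists u v, w = u ++ v /\ L1 u /\ L2 v).
Proof.
move=> [Q1 [i1 [d1 [F1 H1]]]] [Q2 [i2 [d2 [F2 H2]]]].
apply: nreg_reg.
pose tr (s : Q1 + Q2) (a : A) (s' : Q1 + Q2) : Prop :=
  match s, s' with
  | inl q, inl q' => q' = d1 q a
  | inl q, inr q' => F1 (d1 q a) /\ q' = i2
  | inr q, inr q' => q' = d2 q a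
  | inr _, inl _ => False end.
have R2 : forall v q s', nrun tr (inr q) v s' <-> s' = inr (foldl d2 q v).
  elim=> [|a v IH] q s' /=; first by split=> ->.
  split.
    by move=> [[q1|q1] [Ht Hr]] //=; rewrite (proj1 (IH _ _) Hr) /= Ht.
  move=> ->; exists (inr (d2 q a)); split => //; exact/(proj2 (IH _ _)).
have R1 : forall u q, nrun tr (inl q) u (inl (foldl d1 q u)).
  elim=> [|a u IH] q //=; by exists (inl (d1 q a)); split.
have S1 : forall w q s', nrun tr (inl q) w s' ->
    s' = inl (foldl d1 q w) \/
    exists u v, w = u ++ v /\ u <> [::] /\ F1 (foldl d1 q u) /\ s' = inr (foldl d2 i2 v).
  elim=> [|a w IH] q s' /=; first by move=> <-; left.
  move=> [[q1|q1] [Ht Hr]] /=.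
    rewrite /= in Ht; subst q1.
    case: (IH _ _ Hr) => [->|[u [v [-> [Hu [Hf ->]]]]]]; first by left.
    by right; exists (a :: u), v.
  case: Ht => Hf Eq; subst q1; rewrite (proj1 (R2 _ _ _) Hr).
  by right; exists [:: a], w.
exists (Q1 + Q2)%type, (fun s => s = inl i1 \/ (F1 i1 /\ s = inr i2)), tr,
  (fun s => match s with inl q => F1 q /\ F2 i2 | inr q => F2 q end) => w.
split.
  move=> [u [v [-> [Hu Hv]]]].
  move: Hu; rewrite H1 H2 in Hv * => Hu.
  case/lastP: u Hu => [|u a] Hu.
    by exists (inr i2), (inr (foldl d2 i2 v)); split; [right|split => //; apply/(proj2 (R2 _ _ _))].
  exists (inl i1), (inr (foldl d2 i2 v)); split; [by left|split => //].
  rewrite -cats1 -catA nrun_cat; exists (inl (foldl d1 i1 u)); split => //.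
  exists (inr i2); split; last by apply/(proj2 (R2 _ _ _)).
  by rewrite foldl_rcons in Hu.
move=> [s [s' [[->|[Hf1 ->]] [Hr Hf]]]].
  case: (S1 _ _ _ Hr) => [Es|[u [v [-> [_ [Hf2 Es]]]]]].
    by subst s'; case: Hf => Ha Hb; exists w, [::]; rewrite cats0 H1 H2.
  by subst s'; exists u, v; rewrite H1 H2.
have Es := proj1 (R2 _ _ _) Hr; subst s'.
by exists [::], w; rewrite H1 H2.
Qed.

Lemma reg_cons L x : regA L -> regA (fun w => exists w', w = x :: w' /\ L w').
Proof.
move=> HL.
have Hx : regA (fun w : seq A => w = [:: x]).
  apply: nreg_reg.
  exists bool, (eq false), (fun s a s' => s = false /\ a = x /\ s' = true), (eq true) => w.
  split.
    by move=> ->; exists false, true; do !split => //=; exists true.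
  move=> [q [q' [Hq [Hr Hq']]]]; subst q q'.
  case: w Hr => [|a [|b w]] //= [q1 [[_ [-> Eq]] Hr]]; subst q1 => //.
  by move: Hr => /= [q2 [[]]].
apply: reg_ext (reg_concat Hx HL) => w; split.
  by move=> [u [v [-> [-> Hv]]]]; exists v.
by move=> [w' [-> Hw]]; exists [:: x], w'.
Qed.

Lemma reg_pre L s : regA L -> regA (fun w => exists v, w = s ++ v /\ L v).
Proof.
move=> HL; elim: s => [|x s IH].
  by apply: reg_ext HL => w; split; [move=> H; exists w | move=> [v [-> H]]].
apply: reg_ext (reg_cons x IH) => w; split.
  by move=> [w' [-> [v [-> H]]]]; exists v.
by move=> [v [-> H]]; exists (s ++ v); split => //; exists v.
Qed.

Lemma reg_nil : regA (fun w : seq A => w = [::]).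
Proof.
exists bool, true, (fun _ _ => false), idfun => w.
case: w => [|a w] /=; first by split.
have -> : foldl (fun (_ : bool) (_ : A) => false) false w = false by elim: w.
by split.
Qed.

End Reg.

Section Words.
Variables Sigma Gamma : finType.
Local Notation letter := (letter Sigma Gamma).
Local Notation word := (word Sigma Gamma).
Local Notation isS := (@isSigma Sigma Gamma).

Lemma shifts_cons (a : letter) (w : word) :
  shifts (a :: w) = (if w is b :: _ then (if isSigma a != isSigma b then [:: 1] else [::]) else [::])
                    ++ map S (shifts w).
Proof.
rewrite /shifts /=.
case: w => [|b w] //=.
have -> : iota 2 (size w) = map S (iota 1 (size w)) by rewrite -[2]/(1 + 1) iotaDl.
rewrite filter_map /=.
rewrite (@eq_in_filter _ _ (fun i => sigma_at (b :: w) i != sigma_at (b :: w) i.+1)); last first.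
  move=> i; rewrite mem_iota => /andP [Hi _].
  by case: i Hi.
by case: ifP.
Qed.

Lemma shift_cons (a : letter) (w : word) :
  shift (a :: w) = (if w is b :: _ then (isSigma a != isSigma b : nat) else 0) + shift w.
Proof.
rewrite /shift shifts_cons size_cat size_map.
by case: w => [|b w] //=; case: (isSigma a != isSigma b).
Qed.

Lemma shifts_cat (x z : word) : exists P, shifts (x ++ z) = P ++ map (addn (size x)) (shifts z).
Proof.
elim: x => [|a x [P HP]] /=.
  by exists [::]; rewrite /= (eq_map (add0n)) map_id.
rewrite shifts_cons HP map_cat -map_comp.
exists ((if x ++ z is b :: _ then (if isSigma a != isSigma b then [:: 1] else [::]) else [::]) ++ map S P).
by rewrite -catA; congr (_ ++ (_ ++ _)); apply: eq_map => i /=; rewrite addSn.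
Qed.

Lemma shift_le_cat (x z : word) : shift z <= shift (x ++ z).
Proof.
have [P HP] := shifts_cat x z.
by rewrite /shift HP size_cat size_map leq_addl.
Qed.

Lemma pi_i_cat (u v : word) : pi_i (u ++ v) = pi_i u ++ pi_i v.
Proof. exact: pmap_cat. Qed.
Lemma pi_o_cat (u v : word) : pi_o (u ++ v) = pi_o u ++ pi_o v.
Proof. exact: pmap_cat. Qed.

Lemma size_pi_i (w : word) : size (pi_i w) = count isS w.
Proof. by elim: w => [|[x|y] w IH] //=; rewrite IH. Qed.
Lemma size_pi_o (w : word) : size (pi_o w) = count (predC isS) w.
Proof. by elim: w => [|[x|y] w IH] //=; rewrite IH. Qed.
Lemma size_pi (w : word) : size (pi_i w) + size (pi_o w) = size w.
Proof. by rewrite size_pi_i size_pi_o count_predC. Qed.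

Lemma pi_i_inl (x : seq Sigma) : pi_i (map (@inl Sigma Gamma) x) = x.
Proof. by elim: x => //= a x ->. Qed.
Lemma pi_i_inr (y : seq Gamma) : pi_i (map (@inr Sigma Gamma) y) = [::].
Proof. by elim: y. Qed.
Lemma pi_o_inl (x : seq Sigma) : pi_o (map (@inl Sigma Gamma) x) = [::].
Proof. by elim: x. Qed.
Lemma pi_o_inr (y : seq Gamma) : pi_o (map (@inr Sigma Gamma) y) = y.
Proof. by elim: y => //= a y ->. Qed.

Definition cs (w : word) := count isS w.
Definition cg (w : word) := count (predC isS) w.

Lemma lag_step (w : word) i :
  absdiff (cs (take i.+1 w)) (cg (take i.+1 w)) <= absdiff (cs (take i w)) (cg (take i w)) + 1.
Proof.
rewrite -addn1 takeD /cs /cg !count_cat.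
have := count_predC isS (take 1 (drop i w)).
have : size (take 1 (drop i w)) <= 1 by rewrite size_take; case: ltnP.
rewrite /absdiff; lia.
Qed.

Lemma arith_pump N M a b s g k : a <= M -> b <= M -> N.+1 + M <= k -> s != g ->
  N.+1 <= absdiff (a + k * s) (b + k * g).
Proof.
move=> Ha Hb Hk; case: (ltngtP s g) => // H _.
  have : k * s.+1 <= k * g by rewrite leq_mul2l H orbT.
  rewrite mulnS /absdiff; lia.
have : k * g.+1 <= k * s by rewrite leq_mul2l H orbT.
rewrite mulnS /absdiff; lia.
Qed.

Lemma count_flatten_nseq (p : pred letter) k (y : word) : count p (flatten (nseq k y)) = k * count p y.
Proof. by elim: k => //= k IH; rewrite count_cat IH mulSn. Qed.

Section Key.
Variables (Q : finType) (q0 : Q) (d : Q -> letter -> Q) (F : pred Q) (N : nat).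
Hypothesis HN : forall (w : word) n, F (foldl d q0 w) -> has_shiftlag w n -> n <= N.

Definition fsq (q : Q) := finite_shift (fun z : word => F (foldl d q z)).

Lemma foldl_pump s (y : word) k : foldl d s y = s -> foldl d s (flatten (nseq k y)) = s.
Proof. by move=> Hy; elim: k => //= k IH; rewrite foldl_cat Hy. Qed.

Lemma key (x : word) : ~ fsq (foldl d q0 x) -> absdiff (cs x) (cg x) <= #|Q|.
Proof.
set q := foldl d q0 x => Hnfs.
have [z [Hz Hs]] : exists z : word, F (foldl d q z) /\ N < shift z.
  apply: NNPP => H; apply: Hnfs; exists N => z Hz; rewrite leqNgt; apply/negP => Hlt.
  by apply: H; exists z.
rewrite leqNgt; apply/negP.
have : foldl d q0 x = q by [].
move: (size x) {-2}x (erefl (size x)) => n; clear Hnfs.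
elim/ltn_ind: n => n IH x' Hn Hq Hlt.
have Hsz : #|Q| < size x' by move: Hlt; rewrite /cs /cg -(count_predC isS x') /absdiff; lia.
have pump : forall i j, i < j -> j <= #|Q| ->
    foldl d q0 (take i x') = foldl d q0 (take j x') -> False.
  move=> i j Hij Hj Hf.
  set x1 := take i x'; set y := drop i (take j x'); set x2 := drop j x'.
  have Ex : x' = x1 ++ y ++ x2.
    by rewrite catA /x1 /y -{1}(take_takel x' (ltnW Hij)) cat_take_drop cat_take_drop.
  have Hsy : 0 < size y.
    by rewrite /y size_drop size_take; case: (ltnP j (size x')) => HH; lia.
  have Hloop : foldl d (foldl d q0 x1) y = foldl d q0 x1.
    by rewrite -foldl_cat /x1 /y -{1}(take_takel x' (ltnW Hij)) cat_take_drop.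
  case: (eqVneq (cs y) (cg y)) => Hcy.
    apply: (IH (size (x1 ++ x2))) (x1 ++ x2) (erefl _) _ _.
    - by rewrite -Hn Ex !size_cat; lia.
    - by rewrite -Hq Ex !foldl_cat Hloop.
    - by move: Hlt; rewrite Ex /cs /cg /absdiff !count_cat; rewrite /cs /cg in Hcy; move/eqP: Hcy; lia.
  set k := N.+1 + (n + size z).
  have Hk : N.+1 + (n + size z) <= k by [].
  clearbody k.
  set xk := x1 ++ flatten (nseq k y) ++ x2.
  have Hxk : foldl d q0 xk = q.
    by rewrite /xk foldl_cat foldl_cat (foldl_pump _ Hloop) -Hq Ex !foldl_cat Hloop.
  suff Hsl : has_shiftlag (xk ++ z) N.+1.
    by have := @HN (xk ++ z) N.+1; rewrite foldl_cat Hxk => /(_ Hz Hsl); rewrite ltnn.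
  exists (map (addn (size xk)) (take N.+1 (shifts z))); split.
  - have [P ->] := shifts_cat xk z.
    apply: infix_catl; rewrite -{2}(cat_take_drop N.+1 (shifts z)) map_cat.
    exact: prefix_infix.
  - by rewrite size_map size_takel //; exact: Hs.
  - apply/allP => p /mapP [t Ht ->].
    have Hjz : t <= size z.
      move: (mem_take Ht); rewrite mem_filter mem_iota => /andP [_ /andP [_]].
      by case: (size z) => //= m; lia.
    rewrite /lagged /lag takeD take_size_cat // drop_size_cat //.
    rewrite /xk !count_cat !count_flatten_nseq.
    have := @arith_pump N (n + size z) (cs x1 + cs x2 + cs (take t z)) (cg x1 + cg x2 + cg (take t z))
      (cs y) (cg y) k.
    have h1 := count_size isS (take t z).
    have h2 := count_size (predC isS) (take t z).
    have h3 : size (take t z) <= size z by rewrite size_take; case: (ltnP t (size z)); lia.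
    have h4 : size x1 + size y + size x2 = n by rewrite -Hn Ex !size_cat addnA.
    have h5 := count_size isS x1. have h6 := count_size (predC isS) x1.
    have h7 := count_size isS x2. have h8 := count_size (predC isS) x2.
    rewrite /cs /cg /absdiff in Hcy * => H; move: (H (ltac:(lia)) (ltac:(lia)) Hk Hcy).
    lia.
have [i [j [Hij Hf]]] : exists i j : 'I_(#|Q|.+1), i != j /\
    foldl d q0 (take i x') = foldl d q0 (take j x').
  apply: NNPP => H.
  have Hinj : injective (fun i : 'I_(#|Q|.+1) => foldl d q0 (take i x')).
    move=> i j Hf; apply/eqP; apply/negPn/negP => Hij; apply: H; by exists i, j.
  by have := leq_card _ Hinj; rewrite card_ord ltnn.
case: (ltngtP i j) => Hl.
- by apply: (pump i j Hl); [rewrite -ltnS ltn_ord | ].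
- by apply: (pump j i Hl); [rewrite -ltnS ltn_ord | ].
- by move: Hij; rewrite (val_inj Hl) eqxx.
Qed.

End Key.
End Words.

Section Track.
Variable X : eqType.
Implicit Types (p q u : seq X) (t : bool * seq X).
Definition Rel p1 p2 t := if t.1 then p1 = p2 ++ t.2 else p2 = p1 ++ t.2.
Definition trackEq t q1 q2 := if t.1 then t.2 ++ q1 = q2 else q1 = t.2 ++ q2.
Definition flipt t : bool * seq X := (~~ t.1, t.2).
Definition push1 t (x : X) : option (bool * seq X) :=
  if t.1 then Some (true, rcons t.2 x) else
  match t.2 with [::] => Some (true, [:: x]) | y :: s => if x == y then Some (false, s) else None end.
Definition push2 t x := omap flipt (push1 (flipt t) x).
Definition upd t (o1 o2 : seq X) :=
  obind (fun t1 => if o2 is [:: y] then push2 t1 y else Some t1)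
        (if o1 is [:: x] then push1 t x else Some t).
Definition pref p u := exists r, u = p ++ r.

Lemma Rel_flip p1 p2 t : Rel p1 p2 t <-> Rel p2 p1 (flipt t).
Proof. by case: t => [[] s]. Qed.

Lemma Rel_push1 p1 p2 t x t' : Rel p1 p2 t -> push1 t x = Some t' -> Rel (p1 ++ [:: x]) p2 t'.
Proof.
case: t => [[] s] /=.
  by move=> -> [<-] /=; rewrite -catA cats1.
case: s => [|y s] -> /=; first by move=> [<-]; rewrite /Rel /= cats0.
rewrite /push1 /=; case: (eqVneq x y) => [->|] // [<-].
by rewrite /Rel /= -catA.
Qed.

Lemma Rel_push2 p1 p2 t x t' : Rel p1 p2 t -> push2 t x = Some t' -> Rel p1 (p2 ++ [:: x]) t'.
Proof.
move=> /Rel_flip H; rewrite /push2.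
case E: (push1 (flipt t) x) => [t1|] //= [<-].
by apply/Rel_flip; case: t1 E => b s E; have := Rel_push1 H E; rewrite /flipt /= negbK.
Qed.

Lemma pref_cat p q u : pref (p ++ q) u -> pref p u.
Proof. by move=> [r ->]; exists (q ++ r); rewrite catA. Qed.

Lemma push1_some p1 p2 t x u : Rel p1 p2 t -> pref (p1 ++ [:: x]) u -> pref p2 u ->
  exists t', push1 t x = Some t'.
Proof.
case: t => [[] s] /=; first by eexists.
case: s => [|y s] /=; first by eexists.
move=> -> [r1 ->] [r2]; rewrite -!catA => /catI /= [-> _]; rewrite /push1 /= eqxx; by eexists.
Qed.

Lemma push2_some p1 p2 t x u : Rel p1 p2 t -> pref p1 u -> pref (p2 ++ [:: x]) u ->
  exists t', push2 t x = Some t'.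
Proof.
move=> /Rel_flip H H1 H2; have [t1 E] := push1_some H H2 H1.
by rewrite /push2 E; eexists.
Qed.

Lemma Rel_upd p1 p2 t o1 o2 t' : Rel p1 p2 t -> size o1 <= 1 -> size o2 <= 1 ->
  upd t o1 o2 = Some t' -> Rel (p1 ++ o1) (p2 ++ o2) t'.
Proof.
move=> H; rewrite /upd.
case: o1 => [|x [|]] //= _; case: o2 => [|y [|]] //= _.
- by move=> [<-]; rewrite !cats0.
- by rewrite cats0 => /(Rel_push2 H).
- by case E: push1 => [t1|] //= [<-]; rewrite cats0; apply: Rel_push1 E.
- case E: push1 => [t1|] //= E2.
  exact: Rel_push2 (Rel_push1 H E) E2.
Qed.

Lemma upd_some p1 p2 t o1 o2 u : Rel p1 p2 t -> size o1 <= 1 -> size o2 <= 1 ->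
  pref (p1 ++ o1) u -> pref (p2 ++ o2) u -> exists t', upd t o1 o2 = Some t'.
Proof.
move=> H; rewrite /upd.
case: o1 => [|x [|]] //= _; case: o2 => [|y [|]] //= _.
- by move=> _ _; eexists.
- by rewrite cats0 => H1 H2; apply: push2_some H H1 H2.
- move=> H1 /pref_cat H2; have [t1 ->] := push1_some H H1 H2; by eexists.
- move=> H1 H2; have [t1 E] := push1_some H H1 (pref_cat H2).
  rewrite E /=; exact: push2_some (Rel_push1 H E) H1 H2.
Qed.

Lemma Rel_size p1 p2 t : Rel p1 p2 t -> size t.2 = absdiff (size p1) (size p2).
Proof. by case: t => [[] s]; rewrite /Rel /= => ->; rewrite size_cat /absdiff; lia. Qed.

Lemma Rel_trackEq p1 p2 t q1 q2 : Rel p1 p2 t -> (p1 ++ q1 = p2 ++ q2 <-> trackEq t q1 q2).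
Proof.
case: t => [[] s] /= ->; rewrite /trackEq /= -catA; split.
- exact: catI.
- by move=> ->.
- exact: catI.
- by move=> ->.
Qed.

Lemma Rel_nil p1 p2 b : Rel p1 p2 (b, [::]) -> p1 = p2.
Proof. by case: b; rewrite /Rel /= cats0. Qed.

End Track.

Section Phase1.
Variables Sigma Gamma : finType.
Local Notation letter := (letter Sigma Gamma).
Local Notation word := (word Sigma Gamma).
Variables (QT : finType) (t0 : QT) (dT : QT -> letter -> QT).
Variables (QL : finType) (l0 : QL) (dL : QL -> letter -> QL).
Variable fs : QT -> Prop.
Variable K : nat.

Definition piS (a : letter) : seq Sigma := pi_i [:: a].
Definition piG (a : letter) : seq Gamma := pi_o [:: a].
Lemma size_piS a : size (piS a) <= 1. Proof. by case: a. Qed.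
Lemma size_piG a : size (piG a) <= 1. Proof. by case: a. Qed.

Definition st1 := (QL * QT * QT * (bool * K.-bseq Sigma) * (bool * K.-bseq Gamma))%type.
Definition c_ql (c : st1) := c.1.1.1.1.
Definition c_qm (c : st1) := c.1.1.1.2.
Definition c_qw (c : st1) := c.1.1.2.
Definition c_tS (c : st1) : bool * seq Sigma := (c.1.2.1, val c.1.2.2).
Definition c_tG (c : st1) : bool * seq Gamma := (c.2.1, val c.2.2).

Definition tr1 (c : st1) (a : letter) (c' : st1) : Prop :=
  exists b : letter, ~ fs (c_qm c) /\ ~ fs (c_qw c) /\
   c_ql c' = dL (c_ql c) b /\ c_qm c' = dT (c_qm c) b /\ c_qw c' = dT (c_qw c) a /\
   upd (c_tS c) (piS a) (piS b) = Some (c_tS c') /\ upd (c_tG c) (piG a) (piG b) = Some (c_tG c').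

Definition init1 (c : st1) : Prop :=
  c_ql c = l0 /\ c_qm c = t0 /\ c_qw c = t0 /\ (c_tS c).2 = [::] /\ (c_tG c).2 = [::].

Definition P1 (c : st1) (al : word) : Prop := exists c0, init1 c0 /\ nrun tr1 c0 al c.

Lemma reg_P1 c : regA (P1 c).
Proof.
apply: nreg_reg; exists st1, init1, tr1, (eq c) => w; split.
  by move=> [c0 [Hi Hr]]; exists c0, c.
by move=> [c0 [c' [Hi [Hr Hc]]]]; subst c'; exists c0.
Qed.

Lemma pi_i_rcons (w : word) a : pi_i (rcons w a) = pi_i w ++ piS a.
Proof. by rewrite -cats1 pi_i_cat. Qed.
Lemma pi_o_rcons (w : word) a : pi_o (rcons w a) = pi_o w ++ piG a.
Proof. by rewrite -cats1 pi_o_cat. Qed.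

Lemma P1_sound c (al : word) : P1 c al ->
  exists mu : word, size mu = size al /\ foldl dL l0 mu = c_ql c /\ foldl dT t0 mu = c_qm c /\
    foldl dT t0 al = c_qw c /\ Rel (pi_i al) (pi_i mu) (c_tS c) /\ Rel (pi_o al) (pi_o mu) (c_tG c) /\
    forall i, i < size al -> ~ fs (foldl dT t0 (take i al)) /\ ~ fs (foldl dT t0 (take i mu)).
Proof.
elim/last_ind: al c => [|al a IH] c [c0 [[H1 [H2 [H3 [H4 H5]]]] Hr]].
  rewrite /= in Hr; subst c0.
  exists [::]; do !split => //.
  - by case: (c_tS c) H4 => [[] s] /= ->.
  - by case: (c_tG c) H5 => [[] s] /= ->.
have [c1 [Hr1 [b [Hm [Hw [El [Em [Ew [ES EG]]]]]]]]] := proj1 (nrun_rcons _ _ _ _ _) Hr.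
have [mu [Hs [Hl [Hm' [Hw' [RS [RG Hi]]]]]]] := IH c1 (ex_intro _ c0 (conj (conj H1 (conj H2 (conj H3 (conj H4 H5)))) Hr1)).
exists (rcons mu b); rewrite !size_rcons !foldl_rcons Hs Hl Hm' Hw' El Em Ew.
split; first done. split; first done. split; first done. split; first done.
split; first by rewrite pi_i_rcons pi_i_rcons; apply: Rel_upd RS (size_piS _) (size_piS _) ES.
split; first by rewrite pi_o_rcons pi_o_rcons; apply: Rel_upd RG (size_piG _) (size_piG _) EG.
move=> i; rewrite ltnS leq_eqVlt => /orP [/eqP ->|Hlt].
  by rewrite -!cats1 !take_size_cat // Hw' Hm'.
by rewrite -!cats1 !takel_cat ?Hs ?(ltnW Hlt) //; apply: Hi.
Qed.

Lemma P1_complete (w m : word) k : k <= size w -> size m = size w ->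
  pi_i w = pi_i m -> pi_o w = pi_o m ->
  (forall i, i < k -> ~ fs (foldl dT t0 (take i w)) /\ ~ fs (foldl dT t0 (take i m))) ->
  (forall i, i <= k -> absdiff (size (pi_i (take i w))) (size (pi_i (take i m))) <= K /\
                       absdiff (size (pi_o (take i w))) (size (pi_o (take i m))) <= K) ->
  exists c, P1 c (take k w) /\ c_ql c = foldl dL l0 (take k m) /\ c_qm c = foldl dT t0 (take k m) /\
    c_qw c = foldl dT t0 (take k w) /\ Rel (pi_i (take k w)) (pi_i (take k m)) (c_tS c) /\
    Rel (pi_o (take k w)) (pi_o (take k m)) (c_tG c).
Proof.
move=> Hk Hsz Ei Eo Hfs Hb.
elim: k Hk Hfs Hb => [|k IH] Hk Hfs Hb.
  exists (l0, t0, t0, (true, [bseq]), (true, [bseq])); rewrite !take0; do !split => //.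
  by exists (l0, t0, t0, (true, [bseq]), (true, [bseq])).
have [c [HP [El [Em [Ew [RS RG]]]]]] := IH (ltnW Hk) (fun i Hi => Hfs i (ltnW Hi)) (fun i Hi => Hb i (leqW Hi)).
have [a Ea] : exists a, take 1 (drop k w) = [:: a].
  case E: (drop k w) => [|a r]; last by exists a; rewrite /= take0.
  by move: (f_equal size E); rewrite size_drop /=; lia.
have [b Eb] : exists b, take 1 (drop k m) = [:: b].
  case E: (drop k m) => [|b r]; last by exists b; rewrite /= take0.
  by move: (f_equal size E); rewrite size_drop /=; lia.
have Tw : take k.+1 w = take k w ++ [:: a] by rewrite -addn1 takeD Ea.
have Tm : take k.+1 m = take k m ++ [:: b] by rewrite -addn1 takeD Eb.
have prefi : forall n (x : word), pref (pi_i (take n x)) (pi_i x).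
  by move=> n x; exists (pi_i (drop n x)); rewrite -pi_i_cat cat_take_drop.
have prefo : forall n (x : word), pref (pi_o (take n x)) (pi_o x).
  by move=> n x; exists (pi_o (drop n x)); rewrite -pi_o_cat cat_take_drop.
have [tS' ES] : exists t', upd (c_tS c) (piS a) (piS b) = Some t'.
  apply: (upd_some (u := pi_i w) RS (size_piS _) (size_piS _)).
  - by rewrite /piS -pi_i_cat -Tw.
  - by rewrite Ei /piS -pi_i_cat -Tm.
have [tG' EG] : exists t', upd (c_tG c) (piG a) (piG b) = Some t'.
  apply: (upd_some (u := pi_o w) RG (size_piG _) (size_piG _)).
  - by rewrite /piG -pi_o_cat -Tw.
  - by rewrite Eo /piG -pi_o_cat -Tm.
have RS' := Rel_upd RS (size_piS _) (size_piS _) ES.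
have RG' := Rel_upd RG (size_piG _) (size_piG _) EG.
rewrite /piS /piG -pi_i_cat -pi_i_cat -pi_o_cat -pi_o_cat -Tw -Tm in RS' RG'.
have [HbS HbG] := Hb k.+1 (leqnn _).
have HS : size tS'.2 <= K by rewrite (Rel_size RS').
have HG : size tG'.2 <= K by rewrite (Rel_size RG').
exists (dL (c_ql c) b, dT (c_qm c) b, dT (c_qw c) a, (tS'.1, Bseq HS), (tG'.1, Bseq HG)).
rewrite /c_ql /c_qm /c_qw /c_tS /c_tG /= -!surjective_pairing Tw Tm !foldl_cat -El -Em -Ew.
do !split => //.
have [c0 [Hi Hr]] := HP.
exists c0; split => //; apply/nrun_cat; exists c; split => //.
exists (dL (c_ql c) b, dT (c_qm c) b, dT (c_qw c) a, (tS'.1, Bseq HS), (tG'.1, Bseq HG)); split => //.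
exists b; rewrite Em Ew; have [H1 H2] := Hfs k (leqnn _); do !split => //.
- by rewrite /c_tS /= -surjective_pairing.
- by rewrite /c_tG /= -surjective_pairing.
- by rewrite -Tw -Tm.
- by rewrite -Tw -Tm.
Qed.

End Phase1.

Lemma foldl_map (A B R : Type) (f : R -> B -> R) (g : A -> B) z s :
  foldl f z (map g s) = foldl (fun r x => f r (g x)) z s.
Proof. by elim: s z => //= a s IH z. Qed.

Section Z.
Variables Sigma Gamma : finType.
Local Notation letter := (letter Sigma Gamma).
Local Notation word := (word Sigma Gamma).

Definition ilv (bs : seq (seq Sigma * seq Gamma)) : word :=
  flatten [seq map (@inl Sigma Gamma) b.1 ++ map (@inr Sigma Gamma) b.2 | b <- bs].

Lemma ilv_cons b bs : ilv (b :: bs) = (map inl b.1 ++ map inr b.2) ++ ilv bs.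
Proof. by []. Qed.
Lemma pi_i_ilv bs : pi_i (ilv bs) = flatten (map fst bs).
Proof. elim: bs => [|b bs IH] //; by rewrite ilv_cons !pi_i_cat pi_i_inl pi_i_inr IH cats0. Qed.
Lemma pi_o_ilv bs : pi_o (ilv bs) = flatten (map snd bs).
Proof. elim: bs => [|b bs IH] //; by rewrite ilv_cons !pi_o_cat pi_o_inl pi_o_inr IH. Qed.

Lemma blocks (m : word) : exists bs, size bs <= (shift m).+1 /\ m = ilv bs.
Proof.
elim: m => [|a m [bs [Hs Em]]]; first by exists [::].
subst m; rewrite shift_cons.
case: a => [x|y].
  case: bs Hs => [|[x' y'] bs] Hs.
    by exists [:: ([:: x], [::])].
  exists ((x :: x', y') :: bs); split => //.
  by move: Hs; rewrite /=; lia.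
case: bs Hs => [|[x' y'] bs] Hs.
  by exists [:: ([::], [:: y])].
case: x' Hs => [|x0 x'] Hs.
  exists (([::], y :: y') :: bs); split => //.
  by move: Hs; rewrite /=; lia.
exists (([::], [:: y]) :: ([:: x0 & x'], y') :: bs); split => //.
Qed.

Lemma blocksN (m : word) N : shift m <= N -> exists bs, size bs = N.+1 /\ m = ilv bs.
Proof.
move=> HN; have [bs [Hs ->]] := blocks m.
exists (bs ++ nseq (N.+1 - size bs) ([::], [::])); split.
  by rewrite size_cat size_nseq; lia.
rewrite /ilv map_cat flatten_cat; set k := (N.+1 - _).
by elim: k => [|k IH] /=; rewrite ?cats0.
Qed.

Variables (Q : finType) (d : Q -> letter -> Q) (F : pred Q).

Lemma RecRel B : exists (I : finType) (U : Q -> I -> seq Sigma -> Prop) (V : Q -> I -> seq Gamma -> Prop),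
  (forall p i, regA (U p i) /\ regA (V p i)) /\
  forall p u v, (exists bs, size bs = B /\ F (foldl d p (ilv bs)) /\
                   u = flatten (map fst bs) /\ v = flatten (map snd bs)) <->
                exists i, U p i u /\ V p i v.
Proof.
elim: B => [|B [I [U [V [HR HE]]]]].
  exists unit, (fun p _ u => F p /\ u = [::]), (fun _ _ v => v = [::]); split.
    by move=> p i; split; [apply: reg_guard => _; apply: reg_nil | apply: reg_nil].
  move=> p u v; split.
    by move=> [[|b bs] [//= _ [Hf [-> ->]]]]; exists tt.
  by move=> [i [[Hf ->] ->]]; exists [::].
exists ((Q * Q) * I)%type,
  (fun p j u => exists x u1, u = x ++ u1 /\ foldl d p (map inl x) = j.1.1 /\ U j.1.2 j.2 u1),
  (fun p j v => exists y v1, v = y ++ v1 /\ foldl d j.1.1 (map inr y) = j.1.2 /\ V j.1.2 j.2 v1).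
split.
  move=> p [[q1 q2] i]; split.
  - apply: reg_ext (reg_concat
      (L1 := fun x => foldl d p (map inl x) = q1) _ (proj1 (HR q2 i))).
      by move=> w; split; move=> [x [u1 [-> [H1 H2]]]]; exists x, u1.
    exists Q, p, (fun q x => d q (inl x)), (fun q => q == q1) => x.
    by rewrite foldl_map; split => [->|/eqP].
  - apply: reg_ext (reg_concat
      (L1 := fun y => foldl d q1 (map inr y) = q2) _ (proj2 (HR q2 i))).
      by move=> w; split; move=> [x [u1 [-> [H1 H2]]]]; exists x, u1.
    exists Q, q1, (fun q y => d q (inr y)), (fun q => q == q2) => y.
    by rewrite foldl_map; split => [->|/eqP].
move=> p u v; split.
  move=> [[|[x y] bs] [//= [Hs] [Hf [-> ->]]]].
  rewrite /ilv /= !foldl_cat in Hf.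
  set q1 := foldl d p (map inl x) in Hf.
  set q2 := foldl d q1 (map inr y) in Hf.
  have [i [Hu Hv]] := proj1 (HE q2 (flatten (map fst bs)) (flatten (map snd bs)))
    (ex_intro _ bs (conj Hs (conj Hf (conj erefl erefl)))).
  by exists (q1, q2, i); split; [exists x, (flatten (map fst bs)) | exists y, (flatten (map snd bs))].
move=> [[[q1 q2] i] [[x [u1 [-> [/= H1 Hu]]]] [y [v1 [-> [/= H2 Hv]]]]]].
have [bs [Hs [Hf [E1 E2]]]] := proj2 (HE q2 u1 v1) (ex_intro _ i (conj Hu Hv)).
exists ((x, y) :: bs); rewrite /= Hs E1 E2; split => //; split => //.
by rewrite /ilv /= !foldl_cat H1 H2.
Qed.

Lemma reg_proj2 (U : seq Sigma -> Prop) (V : seq Gamma -> Prop) :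
  regA U -> regA V -> regA (fun w : word => U (pi_i w) /\ V (pi_o w)).
Proof.
move=> [Q1 [q1 [d1 [F1 H1]]]] [Q2 [q2 [d2 [F2 H2]]]].
pose dd (q : Q1 * Q2) (a : letter) := match a with inl x => (d1 q.1 x, q.2) | inr y => (q.1, d2 q.2 y) end.
have E : forall w s1 s2, foldl dd (s1, s2) w = (foldl d1 s1 (pi_i w), foldl d2 s2 (pi_o w)).
  by elim=> [|[x|y] w IH] s1 s2 //=; rewrite IH.
exists (Q1 * Q2)%type, (q1, q2), dd, (fun q => F1 q.1 && F2 q.2) => w.
rewrite E /= H1 H2; split; [by move=> [-> ->] | by move/andP].
Qed.

Lemma reg_trackEq (X : eqType) (U : seq X -> Prop) t : regA U ->
  regA (fun u' => exists u, U u /\ trackEq t u' u).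
Proof.
case: t => [[] s] HU; rewrite /trackEq /=.
  apply: reg_ext (reg_quot s HU) => u'; split; first by move=> H; exists (s ++ u').
  by move=> [u [H E]]; rewrite E.
apply: reg_ext (reg_pre s HU) => u'; split; first by move=> [v [-> H]]; exists v.
by move=> [u [H ->]]; exists u.
Qed.

Lemma ZReg p N (tS : bool * seq Sigma) (tG : bool * seq Gamma) :
  (forall m2, F (foldl d p m2) -> shift m2 <= N) ->
  regA (fun w2 : word => exists m2, F (foldl d p m2) /\ trackEq tS (pi_i w2) (pi_i m2) /\
                                    trackEq tG (pi_o w2) (pi_o m2)).
Proof.
move=> HN.
have [I [U [V [HR HE]]]] := RecRel N.+1.
apply: reg_ext (reg_exists (fun i => reg_proj2 (reg_trackEq tS (proj1 (HR p i)))
                                                (reg_trackEq tG (proj2 (HR p i))))) => w2.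
split.
  move=> [i [[u [Hu Eu]] [v [Hv Ev]]]].
  have [bs [Hs [Hf [E1 E2]]]] := proj2 (HE p u v) (ex_intro _ i (conj Hu Hv)).
  by exists (ilv bs); rewrite pi_i_ilv pi_o_ilv -E1 -E2.
move=> [m2 [Hf [E1 E2]]].
have [bs [Hs Em]] := blocksN (HN _ Hf).
have Hf' : F (foldl d p (ilv bs)) by rewrite -Em.
have H1 : pi_i m2 = flatten (map fst bs) by rewrite Em pi_i_ilv.
have H2 : pi_o m2 = flatten (map snd bs) by rewrite Em pi_o_ilv.
have [i [Hu Hv]] := proj1 (HE p (pi_i m2) (pi_o m2))
  (ex_intro _ bs (conj Hs (conj Hf' (conj H1 H2)))).
by exists i; split; [exists (pi_i m2) | exists (pi_o m2)].
Qed.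

End Z.

Section CC.
Variables Sigma Gamma : finType.
Local Notation letter := (letter Sigma Gamma).
Local Notation word := (word Sigma Gamma).
Variables (QT : finType) (t0 : QT) (dT : QT -> letter -> QT) (FT : pred QT) (NT : nat).
Hypothesis HN : forall (w : word) n, FT (foldl dT t0 w) -> has_shiftlag w n -> n <= NT.
Variables (QL : finType) (l0 : QL) (dL : QL -> letter -> QL) (FL : pred QL).
Variables (beta phi : bool).

Local Notation fs := (fsq dT FT).
Local Notation st x := (foldl dT t0 x).
Local Notation K := (#|QT|.+1).

Definition CC (w : word) : Prop :=
  FT (st w) /\ exists m : word, FL (foldl dL l0 m) /\ FT (st m) /\ pi_i m = pi_i w /\ pi_o m = pi_o w /\
   exists k, (forall i, i < k -> ~ fs (st (take i w)) /\ ~ fs (st (take i m))) /\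
    ((k <= size w /\ fs (st (take k m)) /\ (beta -> ~ fs (st (take k w)))) \/ (phi /\ k = (size w).+1)).

Local Notation P c al := (@P1 Sigma Gamma QT t0 dT QL l0 dL fs K c al).

Definition Zc (c : st1 Sigma Gamma QT QL K) (w2 : word) : Prop :=
  exists m2 : word, FL (foldl dL (c_ql c) m2) /\ FT (foldl dT (c_qm c) m2) /\
    trackEq (c_tS c) (pi_i w2) (pi_i m2) /\ trackEq (c_tG c) (pi_o w2) (pi_o m2).

Definition Dec (w : word) : Prop :=
  FT (st w) /\
  ((exists c, (fs (c_qm c) /\ (beta -> ~ fs (c_qw c))) /\
      exists al w2, w = al ++ w2 /\ P c al /\ Zc c w2) \/
   (phi /\ exists c, ((c_tS c).2 = [::] /\ (c_tG c).2 = [::] /\ FL (c_ql c) /\ FT (c_qm c) /\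
                      ~ fs (c_qm c) /\ ~ fs (c_qw c)) /\ P c w)).

Lemma reg_Zc c : fs (c_qm c) -> regA (Zc c).
Proof.
move=> [N HNc].
pose d (q : QL * QT) (a : letter) := (dL q.1 a, dT q.2 a).
have E : forall m2 p, foldl d p m2 = (foldl dL p.1 m2, foldl dT p.2 m2).
  by move=> m2 [p1 p2]; rewrite /d foldl_pair.
have := @ZReg Sigma Gamma (QL * QT)%type d (fun q => FL q.1 && FT q.2) (c_ql c, c_qm c) N
  (c_tS c) (c_tG c).
case.
  by move=> m2; rewrite E /= => /andP [_ H]; apply: HNc.
move=> Q [q0 [dd [FF HH]]]; exists Q, q0, dd, FF => w2; rewrite -HH /Zc.
split; move=> [m2 H]; exists m2; move: H; rewrite E /=.
  by move=> [-> [-> H]].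
by move=> [/andP [-> ->] H].
Qed.

Lemma reg_Dec : regA Dec.
Proof.
apply: reg_and.
  by exists QT, t0, dT, FT.
apply: reg_or.
  apply: reg_exists => c; apply: reg_guard => [[Hc _]].
  apply: reg_ext (reg_concat (reg_P1 t0 dT l0 dL fs c) (reg_Zc Hc)) => w.
  by split; move=> [al [w2 [E [H1 H2]]]]; exists al, w2.
apply: reg_guard => _; apply: reg_exists => c; apply: reg_guard => _.
exact: reg_P1.
Qed.

Lemma lagb_bound (x : word) k : (forall i, i < k -> absdiff (cs (take i x)) (cg (take i x)) <= #|QT|) ->
  forall i, i <= k -> absdiff (cs (take i x)) (cg (take i x)) <= K.
Proof.
move=> H i; rewrite leq_eqVlt => /orP [/eqP ->|Hi]; last by apply: leqW; apply: H.
case: k H => [|k] H; first by rewrite take0.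
by apply: leq_trans (lag_step x k) _; rewrite addn1 ltnS; apply: H.
Qed.

Lemma pi_bound (w m : word) i : i <= size w -> size m = size w ->
  absdiff (cs (take i w)) (cg (take i w)) <= K -> absdiff (cs (take i m)) (cg (take i m)) <= K ->
  absdiff (size (pi_i (take i w))) (size (pi_i (take i m))) <= K /\
  absdiff (size (pi_o (take i w))) (size (pi_o (take i m))) <= K.
Proof.
move=> Hi Hs; rewrite !size_pi_i !size_pi_o.
have := count_predC (@isSigma Sigma Gamma) (take i w).
have := count_predC (@isSigma Sigma Gamma) (take i m).
rewrite !size_take Hs /cs /cg /absdiff; case: ltnP => _; lia.
Qed.

Lemma sizeE (w m : word) : pi_i m = pi_i w -> pi_o m = pi_o w -> size m = size w.
Proof. by move=> E1 E2; rewrite -size_pi -(size_pi w) E1 E2. Qed.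

Lemma CC_Dec w : CC w <-> Dec w.
Proof.
split.
  move=> [HTw [m [HLm [HTm [Ei [Eo [k [Hlt Hcase]]]]]]]].
  have Hs := sizeE Ei Eo.
  split => //.
  have Bw : forall i, i < k -> absdiff (cs (take i w)) (cg (take i w)) <= #|QT|.
    by move=> i /Hlt [H _]; apply: (key HN).
  have Bm : forall i, i < k -> absdiff (cs (take i m)) (cg (take i m)) <= #|QT|.
    by move=> i /Hlt [_ H]; apply: (key HN).
  case: Hcase => [[Hk [Hfs Hb]]|[Hphi Hk]].
    have [c [HP [El [Em [Ew [RS RG]]]]]] := @P1_complete Sigma Gamma QT t0 dT QL l0 dL fs K w m k
      Hk Hs (esym Ei) (esym Eo) Hlt
      (fun i Hi => pi_bound (leq_trans Hi Hk) Hs (lagb_bound Bw Hi) (lagb_bound Bm Hi)).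
    left; exists c; split; first by rewrite Em Ew.
    exists (take k w), (drop k w); rewrite cat_take_drop; split => //; split => //.
    exists (drop k m); rewrite El Em -!foldl_cat !cat_take_drop; split => //; split => //.
    split.
      apply/(Rel_trackEq _ _ RS); by rewrite -!pi_i_cat !cat_take_drop.
    apply/(Rel_trackEq _ _ RG); by rewrite -!pi_o_cat !cat_take_drop.
  subst k.
  have [c [HP [El [Em [Ew [RS RG]]]]]] := @P1_complete Sigma Gamma QT t0 dT QL l0 dL fs K w m (size w)
      (leqnn _) Hs (esym Ei) (esym Eo) (fun i Hi => Hlt i (leqW Hi))
      (fun i Hi => pi_bound Hi Hs (leqW (Bw i Hi)) (leqW (Bm i Hi))).
  rewrite take_size in HP El Em Ew RS RG.
  rewrite -Hs take_size in El Em RS RG.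
  right; split => //; exists c; split => //.
  have [H1 H2] := Hlt (size w) (leqnn _).
  rewrite take_size in H1; rewrite -Hs take_size in H2.
  split; first by apply/size0nil; rewrite (Rel_size RS) Ei /absdiff; lia.
  split; first by apply/size0nil; rewrite (Rel_size RG) Eo /absdiff; lia.
  by rewrite El Em Ew.
move=> [HTw [[c [[Hfs Hb] [al [w2 [Ew [HP [m2 [HL2 [HT2 [E1 E2]]]]]]]]]]|[Hphi [c [[S0 [G0 [HLc [HTc [Hm Hw]]]]] HP]]]]].
  subst w.
  have [mu [Hs [Hl [Hm [Hw [RS [RG Hi]]]]]]] := P1_sound HP.
  rewrite /CC; split; first done.
  exists (mu ++ m2).
  rewrite !foldl_cat Hl Hm !pi_i_cat !pi_o_cat.
  split => //; split => //.
  split; first by symmetry; apply/(Rel_trackEq _ _ RS).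
  split; first by symmetry; apply/(Rel_trackEq _ _ RG).
  exists (size al); split.
    by move=> i Hi0; rewrite !takel_cat ?Hs ?(ltnW Hi0) //; apply: Hi.
  left; rewrite size_cat leq_addr take_size_cat // take_size_cat // Hm Hw; split => //.
have [mu [Hs [Hl [Hm' [Hw' [RS [RG Hi]]]]]]] := P1_sound HP.
split => //; exists mu.
rewrite Hl Hm'; split => //; split => //.
case: (c_tS c) S0 RS => b s /= -> /Rel_nil ->.
case: (c_tG c) G0 RG => b' s' /= -> /Rel_nil ->.
split => //; split => //.
exists (size w).+1; split; last by right.
move=> i; rewrite ltnS leq_eqVlt => /orP [/eqP ->|Hlt]; last by apply: Hi.
by rewrite take_size -Hs take_size Hm' Hw'.
Qed.

Lemma reg_CC : regA CC.
Proof. apply: reg_ext reg_Dec => w; split; by move/CC_Dec. Qed.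

End CC.

Lemma ex_min (P : nat -> Prop) n : P n -> exists m, P m /\ forall j, j < m -> ~ P j.
Proof.
elim/ltn_ind: n => n IH Hn.
case: (classic (exists j, j < n /\ P j)) => [[j [Hj HPj]]|H].
  exact: IH Hj HPj.
by exists n; split => // j Hj HPj; apply: H; exists j.
Qed.

Theorem mainTheorem16 (Sigma Gamma : finType) (S T : lang Sigma Gamma) :
  regular S -> regular T -> finite_shiftlag S -> finite_shiftlag T ->
  (regular (minsync S T) <-> regular (allsync S T)).
Proof.
move=> _ [QT [t0 [dT [FT HTe]]]] _ [NT HNT].
have HN : forall (w : word Sigma Gamma) n, FT (foldl dT t0 w) -> has_shiftlag w n -> n <= NT.
  by move=> w n /HTe; apply: HNT.
pose fs := fsq dT FT.
pose st (x : word Sigma Gamma) := foldl dT t0 x.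
have RegFS_iff : forall x, RegFS (lquot x T) <-> fs (st x).
  move=> x; split.
    move=> [_ [N HNx]]; exists N => z Hz; apply: HNx; rewrite /lquot HTe foldl_cat; exact: Hz.
  move=> [N HNx]; split.
    by exists QT, (st x), dT, FT => z; rewrite /lquot HTe foldl_cat.
  by exists N => z; rewrite /lquot HTe foldl_cat => Hz; apply: HNx.
have fs_take : forall (w : word Sigma Gamma) i j, i <= j -> fs (st (take i w)) -> fs (st (take j w)).
  move=> w i j Hij [N HNx]; exists N => z Hz.
  apply: leq_trans (shift_le_cat (take (j - i) (drop i w)) z) _.
  by apply: HNx; rewrite /st -foldl_cat catA -takeD subnKC // foldl_cat.
have precT_iff : forall w w', precT T w w' <-> forall i, i <= size w -> fs (st (take i w')) -> fs (st (take i w)).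
  move=> w w'; split => H i Hi.
    by move=> /RegFS_iff /(H i Hi) /RegFS_iff.
  by move=> /RegFS_iff /(H i Hi) /RegFS_iff.
have semE : forall (w w' : word Sigma Gamma), sem w' = sem w -> pi_i w' = pi_i w /\ pi_o w' = pi_o w.
  by move=> w w' []; split.
have semS : forall (w w' : word Sigma Gamma), sem w' = sem w -> size w' = size w.
  by move=> w w' /semE [E1 E2]; apply: sizeE.
split.
- move=> [QL [l0 [dL [FL HM]]]].
  change (regA (allsync S T)).
  apply: reg_ext (reg_CC HN l0 dL FL false true) => w; split.
    move=> [HTw [m [HLm [HTm [Ei [Eo _]]]]]].
    have [_ [Hsem _]] := proj2 (HM m) HLm.
    split; first by apply/HTe.
    by move: Hsem; rewrite /sem Ei Eo.
  move=> [HTw Hsem]; rewrite /CC.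
  split; first by apply/HTe.
  case: (classic (exists n (w' : word Sigma Gamma), T w' /\ sem w' = sem w /\ n <= size w /\ fs (st (take n w')))).
    move=> [n Hn].
    have [n0 [[m [HTm [Hsm [Hn0 Hfs]]]] Hmin]] := @ex_min (fun n => exists w' : word Sigma Gamma, T w' /\ sem w' = sem w /\ n <= size w /\ fs (st (take n w'))) n Hn.
    have HMm : minsync S T m.
      split => //; split; first by rewrite Hsm.
      move=> w'' HT'' Hs''; apply/precT_iff => i Hi Hfs''.
      have Hn0i : n0 <= i.
        rewrite leqNgt; apply/negP => Hlt; apply: (Hmin i Hlt); exists w''.
        by rewrite Hs'' Hsm (semS _ _ Hsm) in Hi *.
      exact: fs_take Hn0i Hfs.
    have [Ei Eo] := semE _ _ Hsm.
    exists m; split; first by apply/HM.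
    split; first by apply/HTe.
    split => //; split => //.
    exists n0; split.
      move=> i Hi; split => Hf; apply: (Hmin i Hi).
        by exists w; do !split => //; apply: leq_trans (ltnW Hi) Hn0.
      by exists m; do !split => //; apply: leq_trans (ltnW Hi) Hn0.
    by left.
  move=> Hno.
  exists w; split.
    apply/HM; split => //; split => //.
    move=> w'' HT'' Hs''; apply/precT_iff => i Hi Hfs''.
    by exfalso; apply: Hno; exists i, w''.
  split; first by apply/HTe.
  split => //; split => //.
  exists (size w).+1; split; last by right.
  move=> i Hi; split => Hf; apply: Hno; exists i, w; do !split => //.
- move=> [QA [a0 [dA [FA HA]]]].
  have HA' : regA (fun w : word Sigma Gamma => allsync S T w) by exists QA, a0, dA, FA.
  change (regA (minsync S T)).
  apply: reg_ext (reg_and HA' (reg_not (reg_CC HN t0 dT FT true false))) => w; split.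
    move=> [[HTw Hsem] HnCC]; split => //; split => //.
    move=> w' HT' Hs'; apply/precT_iff => i Hi Hfs'.
    apply: NNPP => Hnfs.
    have [n0 [[Hn0 Hfs0] Hmin]] := @ex_min (fun n => n <= size w /\ fs (st (take n w'))) i (conj Hi Hfs').
    have Hn0i : n0 <= i by rewrite leqNgt; apply/negP => Hlt; apply: (Hmin i Hlt).
    have [Ei Eo] := semE _ _ Hs'.
    apply: HnCC; split; first by apply/HTe.
    exists w'; split; first by apply/HTe.
    split; first by apply/HTe.
    split => //; split => //.
    exists n0; split.
      move=> j Hj; split => Hf.
        by apply: Hnfs; apply: fs_take Hf; apply: leq_trans (ltnW Hj) Hn0i.
      by apply: (Hmin j Hj); split => //; apply: leq_trans (ltnW Hj) Hn0.
    left; split => //; split => // _ Hf.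
    by apply: Hnfs; apply: fs_take Hf.
  move=> [HTw [Hsem Hmin]]; split; first by split.
  move=> [_ [m [_ [HTm [Ei [Eo [k [Hlt [[Hk [Hfs Hb]]|[]]]]]]]]]] //.
  have Hsm : sem m = sem w by rewrite /sem Ei Eo.
  exact: (Hb isT (proj1 (precT_iff w m) (Hmin m (proj2 (HTe m) HTm) Hsm) k Hk Hfs)).
Qed.
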